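(* Assume that $\kappa_{\mathcal H}(X_i,X_i)<\infty$ almost surely for every $i$, and that for every $y\in\mathcal Y$ the map $u\mapsto\ell(y,u)$ is convex and twice continuously differentiable with $u\mapsto\partial_2\ell(y,u)$ being $\beta_{\ell;2}$-Lipschitz continuous. Then for every $z'\in\mathcal Y$, $\mathbf I_{\hat f}(X_{n+1},z')=\sum_{i=1}^{n+1}[I_{\hat f}(X_{n+1},z')]_iK_{X_i}$, where $$I_{\hat f}(X_{n+1},z')=-\frac1{n+1}\partial_2\ell\big(z',\hat a_\lambda(\mathbf u)^TK_{\bullet,n+1}\big)\big[\nabla_2^2\hat R_\lambda(\mathbf u;\hat a_\lambda(\mathbf u))\big]^+K_{\bullet,n+1}\in\mathbb R^{n+1},$$ and $\hat a_\lambda(\mathbf u)$ is the unique minimizer of $a\mapsto\hat R_\lambda(\mathbf u;a)$ in the range of $K$.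
   Context: Data $D=\{(X_1,Y_1),\dots,(X_n,Y_n)\}\subset\mathcal X\times\mathcal Y$ ($\mathcal X\subset\mathbb R^d$, $\mathcal Y\subset\mathbb R$) and $X_{n+1}$; $\mathcal H$ an RKHS with kernel $\kappa_{\mathcal H}$, $K_x=\kappa_{\mathcal H}(x,\cdot)$, Gram matrix $K=(\kappa_{\mathcal H}(X_i,X_j))_{1\le i,j\le n+1}$ with $j$-th column $K_{\bullet,j}$, $\mathcal A=\mathrm{span}\{K_{X_1},\dots,K_{X_{n+1}}\}$. Loss $\ell$, derivatives $\partial_2,\partial_2^2$ in its second argument, $\lambda>0$, fixed $y,z\in\mathcal Y$, $\mathbf u=(1,\dots,1,1,0)\in\mathbb R^{n+2}$. For $v\in\mathbb R^{n+2}$, $f\in\mathcal H$: $\hat{\mathbf R}_\lambda(v;f)=\frac1{n+1}\sum_{i=1}^nv_i\ell(Y_i,f(X_i))+\frac{v_{n+1}}{n+1}\ell(z,f(X_{n+1}))+\frac{v_{n+2}}{n+1}\ell(y,f(X_{n+1}))+\lambda\|f\|_{\mathcal H}^2$, and for $a\in\mathbb R^{n+1}$: $\hat R_\lambda(v;a)=\hat{\mathbf R}_\lambda(v;\sum_ia_iK_{X_i})=\frac1{n+1}\sum_{i=1}^nv_i\ell(Y_i,a^TK_{\bullet,i})+\frac{v_{n+1}}{n+1}\ell(z,a^TK_{\bullet,n+1})+\frac{v_{n+2}}{n+1}\ell(y,a^TK_{\bullet,n+1})+\lambda a^TKa$; $\nabla^2_2\hat R_\lambda(v;a)$ is its Hessian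 in $a$, and $[\cdot]^+$ its inverse on the range of $K$ (Moore–Penrose pseudo-inverse). $\hat f_{\lambda;D^z}$ is the minimizer of $\hat{\mathbf R}_\lambda(\mathbf u;\cdot)$ over $\mathcal H$. The operator $\partial_2^2\hat{\mathbf R}_\lambda(v;f)=\frac1{n+1}\sum_{i=1}^nv_i\partial_2^2\ell(Y_i,f(X_i))K_{X_i}\otimes K_{X_i}+\frac{v_{n+1}}{n+1}\partial_2^2\ell(z,f(X_{n+1}))K_{X_{n+1}}\otimes K_{X_{n+1}}+\frac{v_{n+2}}{n+1}\partial_2^2\ell(y,f(X_{n+1}))K_{X_{n+1}}\otimes K_{X_{n+1}}+2\lambda\mathrm{Id}$ (with $(g\otimes g)h=\langle g,h\rangle_{\mathcal H}g$) is the second Fréchet differential of $\hat{\mathbf R}_\lambda(v;\cdot)$, and $[\cdot]^+$ is the inverse of its restriction to $\mathcal A$. Finally $\mathbf I_{\hat f}(X_{n+1},z')=-\frac1{n+1}\partial_2\ell(z',\hat f_{\lambda;D^z}(X_{n+1}))[\partial_2^2\hat{\mathbf R}_\lambda(\mathbf u;\hat f_{\lambda;D^z})]^+K_{X_{n+1}}$. *)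

(* Defs.v *)
From HB Require Import structures.
From mathcomp Require Import all_boot all_order all_algebra.
From mathcomp Require Import all_classical all_reals all_analysis.
Set Implicit Arguments. Unset Strict Implicit. Unset Printing Implicit Defensive.
Import Order.TTheory GRing.Theory Num.Theory.
Import numFieldNormedType.Exports.
Local Open Scope classical_set_scope.
Local Open Scope ring_scope.

(* Abstract real Hilbert space (V, ip), used to represent the RKHS H.  *)
Definition is_inner_product (R : realType) (V : lmodType R) (ip : V -> V -> R) :=
  [/\ (forall (a : R) (f g h : V), ip (a *: f + g) h = a * ip f h + ip g h),
      (forall f g : V, ip f g = ip g f),
      (forall f : V, 0 <= ip f f) &
      (forall f : V, ip f f = 0 -> f = 0)].

(* completeness for the norm f |-> sqrt (ip f f), stated with squared norms *)
Definition ip_complete (R : realType) (V : lmodType R) (ip : V -> V -> R) :=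
  forall u : nat -> V,
    (forall e : R, 0 < e -> exists N : nat, forall p q : nat, (N <= p)%N -> (N <= q)%N ->
        ip (u p - u q) (u p - u q) < e ^+ 2) ->
    exists f : V, forall e : R, 0 < e -> exists N : nat, forall p : nat, (N <= p)%N ->
        ip (u p - f) (u p - f) < e ^+ 2.

(* (V, ip, Kf) is an RKHS of functions on R^d: f(x) := <f, K_x>, the
   kernel is kappa x x' := <K_x, K_x'>, and f is determined by its values. *)
Definition is_RKHS (R : realType) (d : nat) (V : lmodType R) (ip : V -> V -> R)
    (Kf : 'rV[R]_d -> V) :=
  [/\ is_inner_product ip, ip_complete ip &
      (forall f : V, (forall x, ip f (Kf x) = 0) -> f = 0)].

Definition evalH (R : realType) (d : nat) (V : lmodType R) (ip : V -> V -> R)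
    (Kf : 'rV[R]_d -> V) (f : V) (x : 'rV[R]_d) : R := ip f (Kf x).

Definition kappa (R : realType) (d : nat) (V : lmodType R) (ip : V -> V -> R)
    (Kf : 'rV[R]_d -> V) (x x' : 'rV[R]_d) : R := ip (Kf x) (Kf x').

Definition d2l (R : realType) (l : R -> R -> R) (y u : R) : R := derive1 (l y) u.
Definition d22l (R : realType) (l : R -> R -> R) (y u : R) : R := derive1 (derive1 (l y)) u.

Definition loss_assumptions (R : realType) (Ysp : set R) (l : R -> R -> R) (beta : R) :=
  forall y, Ysp y ->
  [/\ (forall (u v t : R), 0 <= t -> t <= 1 ->
         l y (t * u + (1 - t) * v) <= t * l y u + (1 - t) * l y v),
      (forall u : R, derivable (l y) u 1),
      (forall u : R, derivable (derive1 (l y)) u 1),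
      continuous (derive1 (derive1 (l y))) &
      (forall u u' : R, `|d2l l y u - d2l l y u'| <= beta * `|u - u'|)].

Definition penrose (R : realType) (m : nat) (A B : 'M[R]_m) :=
  [/\ A *m B *m A = A, B *m A *m B = B, (A *m B)^T = A *m B & (B *m A)^T = B *m A].

Definition mpinv (R : realType) (m : nat) (A : 'M[R]_m) : 'M[R]_m :=
  xget 0 [set B | penrose A B].

Definition hessian (R : realType) (m : nat) (f : 'cV[R]_m -> R) (a : 'cV[R]_m) : 'M[R]_m :=
  \matrix_(i, j) derive (fun b => derive f b (delta_mx i 0)) a (delta_mx j 0).

Definition restr_inv (R : realType) (V : lmodType R) (T : V -> V) (A : set V) (b : V) : V :=
  xget 0 [set g | A g /\ T g = b].

Section Empirical.
Variables (R : realType) (d n : nat) (V : lmodType R) (ip : V -> V -> R)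
  (Kf : 'rV[R]_d -> V) (l : R -> R -> R) (lam : R)
  (X : 'I_n.+1 -> 'rV[R]_d) (Y : 'I_n -> R) (y z : R).

(* data index i < n (0-based) as an index of X, and as an index of v *)
Definition iX (i : 'I_n) : 'I_n.+1 := widen_ord (leqnSn n) i.
Definition iv (i : 'I_n) : 'I_n.+2 := widen_ord (ltnW (leqnSn n.+1)) i.
(* the (n+1)-th and (n+2)-th coordinates of v *)
Definition v_z : 'I_n.+2 := inord n.
Definition v_y : 'I_n.+2 := ord_max.

Definition uvec : 'I_n.+2 -> R := fun i => if i == ord_max then 0 else 1.

Local Notation ev := (evalH ip Kf).

Definition Rbold (v : 'I_n.+2 -> R) (f : V) : R :=
  (n.+1%:R)^-1 * \sum_(i < n) v (iv i) * l (Y i) (ev f (X (iX i)))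
  + v v_z / n.+1%:R * l z (ev f (X ord_max))
  + v v_y / n.+1%:R * l y (ev f (X ord_max))
  + lam * ip f f.

Definition Gram : 'M[R]_n.+1 := \matrix_(i, j) kappa ip Kf (X i) (X j).

Definition comb (a : 'cV[R]_n.+1) : V := \sum_i a i 0 *: Kf (X i).

Definition Rhat (v : 'I_n.+2 -> R) (a : 'cV[R]_n.+1) : R := Rbold v (comb a).

Definition in_rangeK (a : 'cV[R]_n.+1) := exists b : 'cV[R]_n.+1, a = Gram *m b.

Definition spanA : set V := [set g | exists a : 'cV[R]_n.+1, g = comb a].

(* second Frechet differential of Rbold v at f, as an operator on V *)
Definition d2Rbold (v : 'I_n.+2 -> R) (f : V) (g : V) : V :=
  (n.+1%:R)^-1 *: \sum_(i < n)
     (v (iv i) * d22l l (Y i) (ev f (X (iX i))) * ip (Kf (X (iX i))) g) *: Kf (X (iX i))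
  + (v v_z / n.+1%:R * d22l l z (ev f (X ord_max)) * ip (Kf (X ord_max)) g) *: Kf (X ord_max)
  + (v v_y / n.+1%:R * d22l l y (ev f (X ord_max)) * ip (Kf (X ord_max)) g) *: Kf (X ord_max)
  + (2 * lam) *: g.

Definition Ibold (fhat : V) (z' : R) : V :=
  (- (n.+1%:R)^-1 * d2l l z' (ev fhat (X ord_max)))
    *: restr_inv (d2Rbold uvec fhat) spanA (Kf (X ord_max)).

Definition Ivec (ahat : 'cV[R]_n.+1) (z' : R) : 'cV[R]_n.+1 :=
  (- (n.+1%:R)^-1 * d2l l z' ((ahat^T *m col ord_max Gram) 0 0))
    *: (mpinv (hessian (Rhat uvec) ahat) *m col ord_max Gram).

End Empirical.

(* Main.v *)
Require Import Defs.
From HB Require Import structures.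
From mathcomp Require Import all_boot all_order all_algebra.
From mathcomp Require Import all_classical all_reals all_analysis.
From mathcomp Require Import ring lra zify.
Set Implicit Arguments. Unset Strict Implicit. Unset Printing Implicit Defensive.
Import Order.TTheory GRing.Theory Num.Theory.
Import numFieldNormedType.Exports.
Local Open Scope classical_set_scope.
Local Open Scope ring_scope.

Section Conv.
Variables (R : realType) (f : R -> R).
Hypothesis hc : forall (u v t : R), 0 <= t -> t <= 1 ->
         f (t * u + (1 - t) * v) <= t * f u + (1 - t) * f v.

Lemma three_pt x y z : x < y -> y < z -> (z - x) * f y <= (y - x) * f z + (z - y) * f x.
Proof.
move=> xy yz.
have zx : 0 < z - x by rewrite subr_gt0 (lt_trans xy).
pose t := (y - x) / (z - x).
have t0 : 0 <= t by apply: divr_ge0; [rewrite subr_ge0; exact: ltW | exact: ltW zx].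
have t1 : t <= 1 by rewrite ler_pdivrMr // mul1r lerD2r; exact: ltW.
have tzx : t * (z - x) = y - x by rewrite /t divfK // gt_eqF.
have ey : t * z + (1 - t) * x = y.
  clearbody t; lra.
have := hc z x t0 t1; rewrite ey => H.
have := ler_wpM2l (ltW zx) H.
have -> : (z - x) * (t * f z + (1 - t) * f x) = (t * (z - x)) * f z + (z - x - t * (z - x)) * f x by ring.
by rewrite tzx; have -> : z - x - (y - x) = z - y by ring.
Qed.

Lemma frac_le (A B p q : R) : 0 < p -> 0 < q -> A * q <= B * p -> A / p <= B / q.
Proof. by move=> p0 q0 H; rewrite ler_pdivrMr // mulrAC ler_pdivlMr. Qed.

Lemma slope1 x y z : x < y -> y < z -> (f y - f x) / (y - x) <= (f z - f x) / (z - x).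
Proof.
move=> xy yz; have := @three_pt x y z xy yz => H.
apply: frac_le; rewrite ?subr_gt0 //; first exact: lt_trans yz.
lra.
Qed.

Lemma slope2 x y z : x < y -> y < z -> (f z - f x) / (z - x) <= (f z - f y) / (z - y).
Proof.
move=> xy yz; have := @three_pt x y z xy yz => H.
apply: frac_le; rewrite ?subr_gt0 //; first exact: lt_trans yz.
lra.
Qed.

Hypothesis df : forall u, derivable f u 1.

Lemma hdiv_neg (A h : R) : h < 0 -> h^-1 *: A = (- A) / (- h).
Proof. by move=> _; rewrite invrN mulrNN mulrC. Qed.

Arguments slope1 {x y z}.
Arguments slope2 {x y z}.
Lemma slope12 x y z : x < y -> y < z -> (f y - f x) / (y - x) <= (f z - f y) / (z - y).
Proof. move=> xy yz; exact: le_trans (slope1 xy yz) (slope2 xy yz). Qed.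
Arguments slope12 {x y z}.

Lemma der_le_slope u v : u < v -> (derive1 f) u <= (f v - f u) / (v - u).
Proof.
move=> uv; rewrite derive1E; apply: limr_le; first exact: df.
near=> h.
have h0 : h != 0 by near: h; exact: nbhs_dnbhs_neq.
have hs : `|h| < v - u by near: h; apply: dnbhs0_lt; rewrite subr_gt0.
rewrite /= scaler1.
move: h0; rewrite neq_lt => /orP[hn|hp].
- have hn' : h + u < u by lra.
  have -> : h^-1 *: (f (h + u) - f u) = (f u - f (h + u)) / (u - (h + u)).
    have -> : u - (h + u) = - h by ring.
    rewrite invrN mulrN -mulNr opprB; exact: mulrC.
  exact: slope12 hn' uv.
- have hu : h + u < v by move: hs; rewrite gtr0_norm //; lra.
  have hp' : u < h + u by lra.
  have -> : h^-1 *: (f (h + u) - f u) = (f (h + u) - f u) / (h + u - u).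
    rewrite addrK; exact: mulrC.
  exact: slope1 hp' hu.
Unshelve. all: by end_near. Qed.

Lemma slope_le_der u v : u < v -> (f v - f u) / (v - u) <= (derive1 f) v.
Proof.
move=> uv; rewrite derive1E; apply: limr_ge; first exact: df.
near=> h.
have h0 : h != 0 by near: h; exact: nbhs_dnbhs_neq.
have hs : `|h| < v - u by near: h; apply: dnbhs0_lt; rewrite subr_gt0.
rewrite /= scaler1.
move: h0; rewrite neq_lt => /orP[hn|hp].
- have hu : u < h + v by move: hs; rewrite ltr0_norm //; lra.
  have hn' : h + v < v by lra.
  have -> : h^-1 *: (f (h + v) - f v) = (f v - f (h + v)) / (v - (h + v)).
    have -> : v - (h + v) = - h by ring.
    rewrite invrN mulrN -mulNr opprB; exact: mulrC.
  exact: slope2 hu hn'.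
- have hp' : v < h + v by lra.
  have -> : h^-1 *: (f (h + v) - f v) = (f (h + v) - f v) / (h + v - v).
    rewrite addrK; exact: mulrC.
  exact: slope12 uv hp'.
Unshelve. all: by end_near. Qed.

Lemma der_mono u v : u <= v -> (derive1 f) u <= (derive1 f) v.
Proof.
rewrite le_eqVlt => /orP[/eqP->//|uv].
exact: le_trans (der_le_slope uv) (slope_le_der uv).
Qed.

Hypothesis df2 : forall u, derivable ((derive1 f)) u 1.

Lemma der2_ge0 x : 0 <= derive1 (derive1 f) x.
Proof.
rewrite derive1E; apply: limr_ge; first exact: df2.
near=> h.
have h0 : h != 0 by near: h; exact: nbhs_dnbhs_neq.
rewrite /= scaler1.
move: h0; rewrite neq_lt => /orP[hn|hp].
- apply: mulr_le0; first by rewrite invr_le0 ltW.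
  by rewrite subr_le0 der_mono //; lra.
- apply: mulr_ge0; first by rewrite invr_ge0 ltW.
  by rewrite subr_ge0 der_mono //; lra.
Unshelve. all: by end_near. Qed.
End Conv.

Section Pinv.
Variable R : realType.

Lemma gram_unit {r m} {C : 'M[R]_(r, m)} : row_free C -> C *m C^T \in unitmx.
Proof.
move=> fC; rewrite -row_free_unit -kermx_eq0; apply/eqP/row_matrixP => i.
rewrite row0.
set u := row i (kermx (C *m C^T)).
have hu : u *m (C *m C^T) = 0 by rewrite /u -row_mul mulmx_ker row0.
have uC : u *m C = 0.
  have : (u *m C) *m (u *m C)^T = 0.
    by rewrite trmx_mul !mulmxA -(mulmxA u) hu !mul0mx.
  move: (u *m C) => w.
  move=> /matrixP/(_ 0 0); rewrite !mxE.
  under eq_bigr => j _ do rewrite mxE -expr2.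
  move=> /psumr_eq0P H; apply/matrixP => a j; rewrite (ord1 a) mxE.
  by apply/eqP; rewrite -sqrf_eq0; apply/eqP; apply: H => // k _; exact: sqr_ge0.
by apply/eqP; rewrite -(mulmx_free_eq0 _ fC) uC.
Qed.

Lemma mp_of_fact r m (Bc : 'M[R]_(m, r)) (C : 'M[R]_(r, m)) :
  row_free Bc^T -> row_free C -> exists B, penrose (Bc *m C) B.
Proof.
move=> hB hC.
set G1 := Bc^T *m Bc; set G2 := C *m C^T.
have u1 : G1 \in unitmx by have := gram_unit hB; rewrite trmxK.
have u2 : G2 \in unitmx by exact: gram_unit.
have sG1 : G1^T = G1 by rewrite /G1 trmx_mul trmxK.
have sG2 : G2^T = G2 by rewrite /G2 trmx_mul trmxK.
exists (C^T *m invmx G2 *m invmx G1 *m Bc^T).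
have hAP : (Bc *m C) *m (C^T *m invmx G2 *m invmx G1 *m Bc^T) = Bc *m invmx G1 *m Bc^T.
  rewrite -!mulmxA (mulmxA C) (mulmxA (C *m C^T)) mulmxV // mul1mx mulmxA.
  by [].
have hPA : (C^T *m invmx G2 *m invmx G1 *m Bc^T) *m (Bc *m C) = C^T *m invmx G2 *m C.
  rewrite -!mulmxA (mulmxA Bc^T) (mulmxA (invmx G1)) mulVmx // mul1mx mulmxA.
  by [].
split.
- rewrite hAP -!mulmxA (mulmxA Bc^T) (mulmxA (invmx G1)) mulVmx // mul1mx.
  by [].
- rewrite hPA -!mulmxA (mulmxA C) (mulmxA (invmx G2)) mulVmx // mul1mx.
  by [].
- by rewrite hAP !trmx_mul trmxK trmx_inv sG1 mulmxA.
- by rewrite hPA !trmx_mul trmxK trmx_inv sG2 mulmxA.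
Qed.

Lemma mp_exists m (A : 'M[R]_m) : exists B, penrose A B.
Proof.
have hC : row_free (row_base A) by exact: row_base_free.
have hB : row_free (col_base A)^T by rewrite /row_free mxrank_tr; exact: col_base_full.
by have := mp_of_fact hB hC; rewrite mulmx_base.
Qed.

Lemma mpinv_penrose m (A : 'M[R]_m) : penrose A (mpinv A).
Proof. by rewrite /mpinv; apply: xgetPex; exact: mp_exists. Qed.
End Pinv.

Section Alg.
Variables (R : realType) (d n : nat) (V : lmodType R) (ip : V -> V -> R)
  (Kf : 'rV[R]_d -> V) (X : 'I_n.+1 -> 'rV[R]_d).
Hypothesis hip : is_inner_product ip.

Local Notation K := (Gram ip Kf X).
Local Notation cb := (comb Kf X).

Lemma ipDl f g h : ip (f + g) h = ip f h + ip g h.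
Proof. by case: hip => L _ _ _; have := L 1 f g h; rewrite scale1r mul1r. Qed.

Lemma ip0l h : ip 0 h = 0.
Proof.
case: hip => L _ _ _; have := L (-1) 0 0 h.
by rewrite scaleN1r oppr0 addr0 mulN1r addNr.
Qed.

Lemma ipZl a f h : ip (a *: f) h = a * ip f h.
Proof. by case: hip => L _ _ _; have := L a f 0 h; rewrite addr0 ip0l addr0. Qed.

Lemma ipC f g : ip f g = ip g f.
Proof. by case: hip. Qed.

Lemma ipDr f g h : ip h (f + g) = ip h f + ip h g.
Proof. by rewrite ipC ipDl !(ipC _ h). Qed.

Lemma ipZr a f h : ip h (a *: f) = a * ip h f.
Proof. by rewrite ipC ipZl ipC. Qed.

Lemma ipNl f h : ip (- f) h = - ip f h.
Proof. by rewrite -scaleN1r ipZl mulN1r. Qed.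

Lemma ipNr f h : ip h (- f) = - ip h f.
Proof. by rewrite ipC ipNl ipC. Qed.

Lemma ipBl f g h : ip (f - g) h = ip f h - ip g h.
Proof. by rewrite ipDl ipNl. Qed.

Lemma ipBr f g h : ip h (f - g) = ip h f - ip h g.
Proof. by rewrite ipC ipBl !(ipC _ h). Qed.

Lemma ip_suml k (F : 'I_k -> V) h : ip (\sum_(i < k) F i) h = \sum_(i < k) ip (F i) h.
Proof.
by rewrite (big_morph (fun f => ip f h) (fun f g => ipDl f g h) (ip0l h)).
Qed.

Lemma ip_ge0 f : 0 <= ip f f.
Proof. by case: hip. Qed.

Lemma ip_def f : ip f f = 0 -> f = 0.
Proof. by case: hip => _ _ _ H; exact: H. Qed.

Lemma GramE i j : K i j = ip (Kf (X i)) (Kf (X j)).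
Proof. by rewrite mxE. Qed.

Lemma Gram_sym : K^T = K.
Proof. by apply/matrixP => i j; rewrite mxE !GramE ipC. Qed.

Lemma ip_comb a h : ip (cb a) h = \sum_i a i 0 * ip (Kf (X i)) h.
Proof. by rewrite /comb ip_suml; apply: eq_bigr => i _; rewrite ipZl. Qed.

Lemma comb_ev a j : ip (cb a) (Kf (X j)) = (K *m a) j 0.
Proof.
rewrite ip_comb mxE; apply: eq_bigr => i _.
by rewrite mulrC GramE ipC.
Qed.

Lemma combD a b : cb (a + b) = cb a + cb b.
Proof.
rewrite /comb -big_split /=; apply: eq_bigr => i _.
by rewrite mxE scalerDl.
Qed.

Lemma combZ c a : cb (c *: a) = c *: cb a.
Proof.
rewrite /comb scaler_sumr; apply: eq_bigr => i _.
by rewrite mxE scalerA.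
Qed.

Lemma combN a : cb (- a) = - cb a.
Proof. by rewrite -(scaleN1r a) combZ scaleN1r. Qed.

Lemma combB a b : cb (a - b) = cb a - cb b.
Proof. by rewrite combD combN. Qed.

Lemma comb_delta i : cb (delta_mx i 0) = Kf (X i).
Proof.
rewrite /comb (bigD1 i) //= mxE !eqxx scale1r big1 ?addr0 // => j /negbTE ji.
by rewrite mxE ji scale0r.
Qed.

Lemma ip_cc a : ip (cb a) (cb a) = \sum_j a j 0 * (K *m a) j 0.
Proof.
rewrite ip_comb; apply: eq_bigr => j _.
by rewrite ipC comb_ev.
Qed.

Lemma comb_eq0 a : K *m a = 0 -> cb a = 0.
Proof.
move=> Ka; apply: ip_def; rewrite ip_cc big1 // => j _.
by rewrite Ka mxE mulr0.
Qed.

Lemma comb_eq a b : K *m a = K *m b -> cb a = cb b.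
Proof.
move=> e; apply/eqP; rewrite -subr_eq0 -combB; apply/eqP/comb_eq0.
by rewrite mulmxBr e subrr.
Qed.

End Alg.

Lemma u_iv (R : realType) n (i : 'I_n) : uvec R (iv i) = 1.
Proof.
rewrite /uvec; case: eqP => // /(congr1 val) /= e.
by have := ltn_ord i; rewrite e; lia.
Qed.

Lemma u_z (R : realType) n : uvec R (v_z n) = 1.
Proof.
rewrite /uvec /v_z; case: eqP => // /(congr1 val) /=.
by rewrite inordK //; lia.
Qed.

Lemma u_y (R : realType) n : uvec R (v_y n) = 0.
Proof. by rewrite /uvec /v_y eqxx. Qed.

Section Mid.
Variables (R : realType) (d n : nat) (V : lmodType R) (ip : V -> V -> R)
  (Kf : 'rV[R]_d -> V) (X : 'I_n.+1 -> 'rV[R]_d).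
Hypothesis hip : is_inner_product ip.
Variables (Ysp : set R) (l : R -> R -> R) (beta lam : R) (Y : 'I_n -> R) (y z : R).
Hypothesis hl : loss_assumptions Ysp l beta.
Hypothesis hY : forall i, Ysp (Y i).
Hypothesis hz : Ysp z.

Lemma lmid y' : Ysp y' -> forall a b, l y' (2^-1 * (a + b)) <= 2^-1 * l y' a + 2^-1 * l y' b.
Proof.
move=> hy' a b; have [hc _ _ _ _] := hl hy'.
have e : 1 - 2^-1 = 2^-1 :> R by field.
have h0 : 0 <= 2^-1 :> R by rewrite invr_ge0 ler0n.
have h1 : 2^-1 <= 1 :> R by rewrite invf_le1 // ler1n.
by have := hc a b _ h0 h1; rewrite e mulrDr.
Qed.

Local Notation Rb := (Rbold ip Kf l lam X Y y z (@uvec R n)).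

Lemma Rbold_mid f1 f2 :
  Rb (2^-1 *: (f1 + f2)) <= 2^-1 * Rb f1 + 2^-1 * Rb f2
     - lam * (2^-1 * 2^-1 * ip (f1 - f2) (f1 - f2)).
Proof.
have evg x : evalH ip Kf (2^-1 *: (f1 + f2)) x
    = 2^-1 * (evalH ip Kf f1 x + evalH ip Kf f2 x).
  by rewrite /evalH ipZl // ipDl.
have Hip : ip (2^-1 *: (f1 + f2)) (2^-1 *: (f1 + f2))
   = 2^-1 * ip f1 f1 + 2^-1 * ip f2 f2 - 2^-1 * 2^-1 * ip (f1 - f2) (f1 - f2).
  rewrite (ipZl hip).
  rewrite (ipZr hip).
  rewrite !(ipDl hip).
  rewrite !(ipDr hip).
  rewrite ?(ipNl hip) ?(ipNr hip).
  rewrite (ipC hip f2 f1).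
  move: (ip f1 f1) (ip f1 f2) (ip f2 f2) => a b c.
  by field.
have N0 : 0 <= (n.+1%:R : R)^-1 by rewrite invr_ge0 ler0n.
have H1 : (n.+1%:R)^-1 * \sum_(i < n) uvec R (iv i) * l (Y i) (evalH ip Kf (2^-1 *: (f1 + f2)) (X (iX i)))
   <= 2^-1 * ((n.+1%:R)^-1 * \sum_(i < n) uvec R (iv i) * l (Y i) (evalH ip Kf f1 (X (iX i))))
    + 2^-1 * ((n.+1%:R)^-1 * \sum_(i < n) uvec R (iv i) * l (Y i) (evalH ip Kf f2 (X (iX i)))).
  rewrite !mulr_sumr -big_split /=; apply: ler_sum => i _.
  rewrite u_iv !mul1r evg !(mulrCA 2^-1) -mulrDr.
  by apply: ler_wpM2l => //; exact: lmid.
have Hz : uvec R (v_z n) / n.+1%:R * l z (evalH ip Kf (2^-1 *: (f1 + f2)) (X ord_max))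
   <= 2^-1 * (uvec R (v_z n) / n.+1%:R * l z (evalH ip Kf f1 (X ord_max)))
    + 2^-1 * (uvec R (v_z n) / n.+1%:R * l z (evalH ip Kf f2 (X ord_max))).
  rewrite u_z !mul1r evg !(mulrCA 2^-1) -mulrDr.
  by apply: ler_wpM2l => //; exact: lmid.
rewrite /Rbold Hip u_y !mul0r.
move: H1 Hz.
set Ag := _^-1 * \sum_(i < n) uvec R (iv i) * l (Y i) (evalH ip Kf (2^-1 *: (f1 + f2)) (X (iX i))).
set A1 := _^-1 * \sum_(i < n) uvec R (iv i) * l (Y i) (evalH ip Kf f1 (X (iX i))).
set A2 := _^-1 * \sum_(i < n) uvec R (iv i) * l (Y i) (evalH ip Kf f2 (X (iX i))).
set Zg := uvec R (v_z n) / n.+1%:R * l z (evalH ip Kf (2^-1 *: (f1 + f2)) (X ord_max)).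
set Z1 := uvec R (v_z n) / n.+1%:R * l z (evalH ip Kf f1 (X ord_max)).
set Z2 := uvec R (v_z n) / n.+1%:R * l z (evalH ip Kf f2 (X ord_max)).
move: (ip f1 f1) (ip f2 f2) (ip (f1 - f2) (f1 - f2)) => a c e.
clearbody Ag A1 A2 Zg Z1 Z2 => H1 Hz.
have -> : lam * (2^-1 * a + 2^-1 * c - 2^-1 * 2^-1 * e)
  = 2^-1 * (lam * a) + 2^-1 * (lam * c) - lam * (2^-1 * 2^-1 * e) by ring.
move: (lam * a) (lam * c) (lam * (2^-1 * 2^-1 * e)) => p q r.
lra.
Qed.

End Mid.

Section B.
Variables (R : realType) (d n : nat) (V : lmodType R) (ip : V -> V -> R)
  (Kf : 'rV[R]_d -> V) (X : 'I_n.+1 -> 'rV[R]_d).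
Hypothesis hip : is_inner_product ip.
Variables (Ysp : set R) (l : R -> R -> R) (beta lam : R) (Y : 'I_n -> R) (y z : R).
Hypothesis hl : loss_assumptions Ysp l beta.
Hypothesis hY : forall i, Ysp (Y i).
Hypothesis hz : Ysp z.
Hypothesis hlam : 0 < lam.

Local Notation K := (Gram ip Kf X).
Local Notation cb := (comb Kf X).
Local Notation Rb := (Rbold ip Kf l lam X Y y z (@uvec R n)).

Lemma Rbold_ext f g : (forall j, evalH ip Kf f (X j) = evalH ip Kf g (X j)) ->
  ip f f <= ip g g -> Rb f <= Rb g.
Proof.
move=> E fg; rewrite /Rbold.
rewrite (eq_bigr (fun i => uvec R (iv i) * l (Y i) (evalH ip Kf g (X (iX i))))); last first.
  by move=> i _; rewrite E.
rewrite !E; apply: lerD => //; exact: ler_wpM2l (ltW hlam) _ _ fg.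
Qed.

Lemma sumsq_eq0 m (v : 'cV[R]_m) : (v^T *m v) 0 0 = 0 -> v = 0.
Proof.
rewrite mxE; under eq_bigr => j _ do rewrite mxE -expr2.
move=> /psumr_eq0P H; apply/matrixP => j a; rewrite (ord1 a) mxE.
by apply/eqP; rewrite -sqrf_eq0; apply/eqP; apply: H => // k _; exact: sqr_ge0.
Qed.

Variable fhat : V.
Hypothesis hfhat : forall g : V, Rb fhat <= Rb g.
Variable ahat : 'cV[R]_n.+1.
Hypothesis hahat_min : forall a : 'cV[R]_n.+1, in_rangeK ip Kf X a -> Rhat ip Kf l lam X Y y z (@uvec R n) ahat <= Rhat ip Kf l lam X Y y z (@uvec R n) a.

Lemma repr_exists : exists a, in_rangeK ip Kf X a /\ Rb (cb a) <= Rb fhat.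
Proof.
set w : 'cV[R]_n.+1 := \col_j ip fhat (Kf (X j)).
have [p1 p2 p3 p4] := mpinv_penrose K.
set P := mpinv K in p1 p2 p3 p4.
have KKP : K *m (K *m P) = K.
  by have := congr1 trmx p1; rewrite trmx_mul p3 Gram_sym.
have KPw : K *m (P *m w) = w.
  set v := w - K *m (P *m w).
  have Kv : K *m v = 0 by rewrite mulmxBr !mulmxA -(mulmxA K K) KKP subrr.
  have cv := comb_eq0 hip Kv.
  have vw : (v^T *m w) 0 0 = 0.
    have := ip_comb Kf X hip v fhat; rewrite cv ip0l // => e.
    rewrite mxE [RHS]e; apply: eq_bigr => j _; by rewrite !mxE (ipC hip (Kf (X j)) fhat).
  have vP : v^T *m (K *m P) = 0.
    apply: trmx_inj; rewrite trmx_mul trmxK p3 trmx0.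
    rewrite /v mulmxBr -!mulmxA (mulmxA P K) (mulmxA K (P *m K)) (mulmxA K P) p1.
    by rewrite subrr.
  have vv : (v^T *m v) 0 0 = 0.
    rewrite {2}/v mulmxBr (mulmxA K P w) (mulmxA v^T (K *m P)) vP mul0mx subr0. done.
  by apply/eqP; rewrite eq_sym -subr_eq0; apply/eqP; exact: sumsq_eq0 vv.
set a := K *m (P *m (P *m w)).
have Ka : K *m a = w by rewrite /a (mulmxA K P) (mulmxA K (K *m P)) KKP KPw.
exists a; split; first by exists (P *m (P *m w)).
have E j : evalH ip Kf (cb a) (X j) = evalH ip Kf fhat (X j).
  by rewrite /evalH comb_ev // Ka mxE.
apply: Rbold_ext => //.
have e1 : ip (cb a) fhat = ip (cb a) (cb a).
  rewrite ip_cc // ip_comb //; apply: eq_bigr => j _.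
  by rewrite Ka [w _ _]mxE (ipC hip (Kf (X j)) fhat).
have := ip_ge0 hip (fhat - cb a).
rewrite ipBl // !ipBr // (ipC hip fhat (cb a)) e1.
lra.
Qed.

Lemma fhat_comb : fhat = cb ahat.
Proof.
have [a [ra ha]] := repr_exists.
have h1 : Rb (cb ahat) <= Rb fhat := le_trans (hahat_min ra) ha.
have := Rbold_mid Kf X hip lam y hl hY hz fhat (cb ahat).
have := hfhat (2^-1 *: (fhat + cb ahat)).
have e0 := ip_ge0 hip (fhat - cb ahat).
set e := ip (fhat - cb ahat) (fhat - cb ahat) in e0 * => H1 H2.
have : lam * (2^-1 * 2^-1 * e) <= 0.
  move: (lam * _) H1 H2 => q; lra.
rewrite pmulr_rle0 // pmulr_rle0; last by rewrite mulr_gt0 // invr_gt0 ltr0n.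
move=> e1.
have /(ip_def hip) /eqP : e = 0 by apply/eqP; rewrite eq_le e1 e0.
by rewrite subr_eq0 => /eqP.
Qed.
End B.

Section D1.
Variable R : realType.

Lemma dirder m (F : 'cV[R]_m -> R) b v :
  derive F b v = derive1 (fun h => F (h *: v + b)) 0.
Proof.
rewrite /derive /derive1.
have -> : (fun h : R => h^-1 *: ((F \o shift b) (h *: v) - F b)) =
  (fun h : R => h^-1 *: ((fun h => F (h *: v + b)) (h + 0) - (fun h => F (h *: v + b)) 0)).
  by apply: funext => h /=; rewrite addr0 scale0r add0r.
by [].
Qed.

Lemma isd_val (phi : R -> R) (D : R) : is_derive (0:R) (1:R) phi D -> derive1 phi 0 = D.
Proof. by move=> H; rewrite derive1E derive_val. Qed.

Lemma isdD (f g : R -> R) x a b : is_derive x (1:R) f a -> is_derive x 1 g b ->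
  is_derive x 1 (fun h => f h + g h) (a + b).
Proof. by move=> Hf Hg; exact: is_deriveD. Qed.

Lemma isdMl (k : R) (f : R -> R) x a : is_derive x (1:R) f a ->
  is_derive x 1 (fun h => k * f h) (k * a).
Proof. by move=> Hf; exact: is_deriveZ. Qed.

Lemma isd_cst (c : R) x : is_derive x (1:R) (fun _ => c) 0.
Proof. exact: is_derive_cst. Qed.

Lemma isd_sum k (F : 'I_k -> R -> R) (a : 'I_k -> R) x :
  (forall i, is_derive x (1:R) (F i) (a i)) ->
  is_derive x 1 (fun h => \sum_(i < k) F i h) (\sum_(i < k) a i).
Proof. by move=> H; have := is_derive_sum H; rewrite fct_sumE. Qed.

Lemma isd_lin (d c x : R) : is_derive x (1:R) (fun h => h * d + c) d.
Proof.
have H := isdD (isdMl d (is_derive_id x (1:R))) (isd_cst c x).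
rewrite mulr1 addr0 in H.
have -> : (fun h : R => h * d + c) = (fun h => d * h + c).
  by apply: funext => h; rewrite mulrC.
exact: H.
Qed.

Lemma isd_comp (g : R -> R) (c d x : R) : (forall u, derivable g u 1) ->
  is_derive x (1:R) (fun h => g (h * d + c)) (derive1 g (x * d + c) * d).
Proof.
move=> dg.
have H1 : is_derive (x * d + c) (1:R) g (derive1 g (x * d + c)).
  by rewrite derive1E; exact: derivableP.
exact: (is_derive1_comp (f := g) (g := fun h => h * d + c) H1 (isd_lin d c x)).
Qed.

Lemma isd_quad (A B C : R) :
  is_derive (0:R) (1:R) (fun h => h * (h * A + B) + (h * B + C)) (B + B).
Proof.
have H1 := @is_deriveM R R^o id (fun h => h * A + B) 0 1 1 A (is_derive_id _ _) (isd_lin A B 0).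
have H := isdD H1 (isd_lin B C 0).
move: H; rewrite /= !mul0r scale0r add0r add0r scaler1.
by [].
Qed.

End D1.

Section D2.
Variables (R : realType) (d n : nat) (V : lmodType R) (ip : V -> V -> R)
  (Kf : 'rV[R]_d -> V) (X : 'I_n.+1 -> 'rV[R]_d).
Hypothesis hip : is_inner_product ip.
Variables (Ysp : set R) (l : R -> R -> R) (beta lam : R) (Y : 'I_n -> R) (y z : R).
Hypothesis hl : loss_assumptions Ysp l beta.
Hypothesis hY : forall i, Ysp (Y i).
Hypothesis hy : Ysp y.
Hypothesis hz : Ysp z.

Local Notation ev := (evalH ip Kf).
Local Notation N := (n.+1%:R : R).

Lemma dl y' : Ysp y' -> forall u, derivable (l y') u 1.
Proof. by move=> hy'; have [_ H _ _ _] := hl hy'. Qed.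

Lemma ddl y' : Ysp y' -> forall u, derivable (derive1 (l y')) u 1.
Proof. by move=> hy'; have [_ _ H _ _] := hl hy'. Qed.

Lemma ev_line h f g x : ev (h *: f + g) x = h * ev f x + ev g x.
Proof. by rewrite /evalH (ipDl hip) (ipZl hip). Qed.

Definition dR (v : 'I_n.+2 -> R) (g f : V) : R :=
  N^-1 * \sum_(i < n) v (iv i) * (derive1 (l (Y i)) (ev g (X (iX i))) * ev f (X (iX i)))
  + v (v_z n) / N * (derive1 (l z) (ev g (X ord_max)) * ev f (X ord_max))
  + v (v_y n) / N * (derive1 (l y) (ev g (X ord_max)) * ev f (X ord_max))
  + lam * (ip f g + ip f g).

Lemma line1 v f g :
  derive1 (fun h => Rbold ip Kf l lam X Y y z v (h *: f + g)) 0 = dR v g f.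
Proof.
have E : (fun h => Rbold ip Kf l lam X Y y z v (h *: f + g)) =
  (fun h => N^-1 * \sum_(i < n) v (iv i) * l (Y i) (h * ev f (X (iX i)) + ev g (X (iX i)))
  + v (v_z n) / N * l z (h * ev f (X ord_max) + ev g (X ord_max))
  + v (v_y n) / N * l y (h * ev f (X ord_max) + ev g (X ord_max))
  + lam * (h * (h * ip f f + ip f g) + (h * ip f g + ip g g))).
  apply: funext => h; rewrite /Rbold !ev_line.
  under eq_bigr => i _ do rewrite ev_line.
  rewrite !(ipDl hip) !(ipZl hip) !(ipDr hip) !(ipZr hip) (ipC hip g f).
  by [].
rewrite E; apply: isd_val.
have T1 := isdMl N^-1 (isd_sum (fun i => isdMl (v (iv i))
   (isd_comp (ev g (X (iX i))) (ev f (X (iX i))) 0 (dl (hY i))))).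
have T2 := isdMl (v (v_z n) / N) (isd_comp (ev g (X ord_max)) (ev f (X ord_max)) 0 (dl hz)).
have T3 := isdMl (v (v_y n) / N) (isd_comp (ev g (X ord_max)) (ev f (X ord_max)) 0 (dl hy)).
have T4 := isdMl lam (isd_quad (ip f f) (ip f g) (ip g g)).
apply: (is_derive_eq (isdD (isdD (isdD T1 T2) T3) T4)).
under eq_bigr => i _ do rewrite mul0r add0r.
by rewrite !mul0r !add0r /dR.
Qed.

Definition d2R (v : 'I_n.+2 -> R) (g f1 f2 : V) : R :=
  N^-1 * \sum_(i < n) v (iv i) * (ev f1 (X (iX i)) * (derive1 (derive1 (l (Y i))) (ev g (X (iX i))) * ev f2 (X (iX i))))
  + v (v_z n) / N * (ev f1 (X ord_max) * (derive1 (derive1 (l z)) (ev g (X ord_max)) * ev f2 (X ord_max)))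
  + v (v_y n) / N * (ev f1 (X ord_max) * (derive1 (derive1 (l y)) (ev g (X ord_max)) * ev f2 (X ord_max)))
  + lam * (ip f1 f2 + ip f1 f2).

Lemma line2 v f1 f2 g :
  derive1 (fun h => dR v (h *: f2 + g) f1) 0 = d2R v g f1 f2.
Proof.
have E : (fun h => dR v (h *: f2 + g) f1) =
  (fun h => N^-1 * \sum_(i < n) v (iv i) * (ev f1 (X (iX i)) * derive1 (l (Y i)) (h * ev f2 (X (iX i)) + ev g (X (iX i))))
  + v (v_z n) / N * (ev f1 (X ord_max) * derive1 (l z) (h * ev f2 (X ord_max) + ev g (X ord_max)))
  + v (v_y n) / N * (ev f1 (X ord_max) * derive1 (l y) (h * ev f2 (X ord_max) + ev g (X ord_max)))
  + lam * (h * (ip f1 f2 + ip f1 f2) + (ip f1 g + ip f1 g))).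
  apply: funext => h; rewrite /dR !ev_line.
  congr (_ + _ + _ + _).
  - congr (_ * _); apply: eq_bigr => i _; rewrite ev_line; ring.
  - ring.
  - ring.
  - rewrite !(ipDr hip) !(ipZr hip); ring.
rewrite E; apply: isd_val.
have T1 := isdMl N^-1 (isd_sum (fun i => isdMl (v (iv i)) (isdMl (ev f1 (X (iX i)))
   (isd_comp (ev g (X (iX i))) (ev f2 (X (iX i))) 0 (ddl (hY i)))))).
have T2 := isdMl (v (v_z n) / N) (isdMl (ev f1 (X ord_max)) (isd_comp (ev g (X ord_max)) (ev f2 (X ord_max)) 0 (ddl hz))).
have T3 := isdMl (v (v_y n) / N) (isdMl (ev f1 (X ord_max)) (isd_comp (ev g (X ord_max)) (ev f2 (X ord_max)) 0 (ddl hy))).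
have T4 := isdMl lam (isd_lin (ip f1 f2 + ip f1 f2) (ip f1 g + ip f1 g) 0).
apply: (is_derive_eq (isdD (isdD (isdD T1 T2) T3) T4)).
under eq_bigr => i _ do rewrite mul0r add0r.
by rewrite !mul0r !add0r /d2R.
Qed.

End D2.

Lemma uvec_ge0 (R : realType) n (k : 'I_n.+2) : 0 <= uvec R k.
Proof. by rewrite /uvec; case: ifP => _ //; exact: ler01. Qed.

Section M1.
Variables (R : realType) (d n : nat) (V : lmodType R) (ip : V -> V -> R)
  (Kf : 'rV[R]_d -> V) (X : 'I_n.+1 -> 'rV[R]_d).
Hypothesis hip : is_inner_product ip.
Variables (Ysp : set R) (l : R -> R -> R) (beta lam : R) (Y : 'I_n -> R) (y z : R).
Hypothesis hl : loss_assumptions Ysp l beta.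
Hypothesis hY : forall i, Ysp (Y i).
Hypothesis hy : Ysp y.
Hypothesis hz : Ysp z.
Hypothesis hlam : 0 < lam.
Variable g0 : V.

Local Notation ev := (evalH ip Kf).
Local Notation N := (n.+1%:R : R).
Local Notation T := (d2Rbold ip Kf l lam X Y y z (@uvec R n) g0).
Local Notation D2 := (d2R ip Kf X l lam Y y z (@uvec R n) g0).

Lemma c4 (a b c e a' b' c' e' : R) : a = a' -> b = b' -> c = c' -> e = e' ->
  a + b + c + e = a' + b' + c' + e'.
Proof. by move=> -> -> -> ->. Qed.

Lemma ipD4 a b c e h : ip (a + b + c + e) h = ip a h + ip b h + ip c h + ip e h.
Proof. by rewrite !(ipDl hip). Qed.

Lemma Tip f1 f2 : ip (T f2) f1 = D2 f1 f2.
Proof.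
rewrite /d2Rbold ipD4 /d2R.
apply: c4.
- rewrite (ipZl hip) (ip_suml hip); congr (_ * _); apply: eq_bigr => i _.
  rewrite (ipZl hip) /evalH /d22l (ipC hip (Kf _) f2) (ipC hip (Kf _) f1); ring.
- rewrite (ipZl hip) /evalH /d22l (ipC hip (Kf _) f2) (ipC hip (Kf _) f1); ring.
- rewrite (ipZl hip) /evalH /d22l (ipC hip (Kf _) f2) (ipC hip (Kf _) f1); ring.
- rewrite (ipZl hip) (ipC hip f2 f1); ring.
Qed.

Lemma D2_sym f1 f2 : D2 f1 f2 = D2 f2 f1.
Proof.
rewrite /d2R (ipC hip f1 f2); apply: c4.
- by congr (_ * _); apply: eq_bigr => i _; ring.
- ring.
- ring.
- by [].
Qed.

Lemma d22_ge0 y' u : Ysp y' -> 0 <= derive1 (derive1 (l y')) u.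
Proof. by move=> hy'; have [hc d1 d2 _ _] := hl hy'; exact: der2_ge0 hc d1 d2 u. Qed.

Lemma sq_ge0 (e dd : R) : 0 <= dd -> 0 <= e * (dd * e).
Proof. by move=> h; rewrite mulrCA; apply: mulr_ge0 => //; rewrite -expr2; exact: sqr_ge0. Qed.

Lemma D2_pos f : lam * (ip f f + ip f f) <= D2 f f.
Proof.
rewrite /d2R lerDr.
have N0 : 0 <= N^-1 by rewrite invr_ge0 ler0n.
apply: addr_ge0; first apply: addr_ge0.
- apply: mulr_ge0 => //; apply: sumr_ge0 => i _; apply: mulr_ge0; first exact: uvec_ge0.
  exact/sq_ge0/d22_ge0.
- apply: mulr_ge0; first by apply: mulr_ge0 => //; exact: uvec_ge0.
  exact/sq_ge0/d22_ge0.
- apply: mulr_ge0; first by apply: mulr_ge0 => //; exact: uvec_ge0.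
  exact/sq_ge0/d22_ge0.
Qed.

Lemma alg_Z (c cz cy a b m : R) : c * 0 + cz * (0 * a) + cy * (0 * b) + m * (0 + 0) = 0.
Proof. ring. Qed.

Lemma alg_B (c S1 S2 cz a dz p1 p2 cy a' dy m q1 q2 : R) :
 c * (S1 - S2) + cz * (a * (dz * (p1 - p2))) + cy * (a' * (dy * (p1 - p2))) + m * ((q1 - q2) + (q1 - q2))
 = (c * S1 + cz * (a * (dz * p1)) + cy * (a' * (dy * p1)) + m * (q1 + q1))
   - (c * S2 + cz * (a * (dz * p2)) + cy * (a' * (dy * p2)) + m * (q2 + q2)).
Proof. ring. Qed.

Lemma D2_zero f1 f2 : (forall j, ev f1 (X j) = 0) -> ip f1 f2 = 0 -> D2 f1 f2 = 0.
Proof.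
move=> e0 i0; rewrite /d2R !e0 i0 big1; last by move=> i _; rewrite e0 mul0r mulr0.
exact: alg_Z.
Qed.

Lemma D2_B f g1 g2 : D2 f (g1 - g2) = D2 f g1 - D2 f g2.
Proof.
have HS : \sum_(i < n) uvec R (iv i) * (ev f (X (iX i)) * (derive1 (derive1 (l (Y i))) (ev g0 (X (iX i))) * ev (g1 - g2) (X (iX i))))
  = \sum_(i < n) uvec R (iv i) * (ev f (X (iX i)) * (derive1 (derive1 (l (Y i))) (ev g0 (X (iX i))) * ev g1 (X (iX i))))
  - \sum_(i < n) uvec R (iv i) * (ev f (X (iX i)) * (derive1 (derive1 (l (Y i))) (ev g0 (X (iX i))) * ev g2 (X (iX i)))).
  by rewrite -sumrB; apply: eq_bigr => i _; rewrite /evalH (ipBl hip); ring.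
rewrite /d2R HS /evalH !(ipBl hip) (ipBr hip).
exact: alg_B.
Qed.

End M1.

Section M2.
Variables (R : realType) (d n : nat) (V : lmodType R) (ip : V -> V -> R)
  (Kf : 'rV[R]_d -> V) (X : 'I_n.+1 -> 'rV[R]_d).
Hypothesis hip : is_inner_product ip.
Variables (Ysp : set R) (l : R -> R -> R) (beta lam : R) (Y : 'I_n -> R) (y z : R).
Hypothesis hl : loss_assumptions Ysp l beta.
Hypothesis hY : forall i, Ysp (Y i).
Hypothesis hy : Ysp y.
Hypothesis hz : Ysp z.
Hypothesis hlam : 0 < lam.

Local Notation K := (Gram ip Kf X).
Local Notation cb := (comb Kf X).
Local Notation U := (@uvec R n).

Lemma hess_eq a0 : hessian (Rhat ip Kf l lam X Y y z U) a0 =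
  \matrix_(i, j) d2R ip Kf X l lam Y y z U (cb a0) (Kf (X i)) (Kf (X j)).
Proof.
apply/matrixP => i j; rewrite !mxE.
have G : (fun b => derive (Rhat ip Kf l lam X Y y z U) b (delta_mx i 0)) =
         (fun b => dR ip Kf X l lam Y y z U (cb b) (Kf (X i))).
  apply: funext => b; rewrite dirder.
  have -> : (fun h => Rhat ip Kf l lam X Y y z U (h *: delta_mx i 0 + b)) =
            (fun h => Rbold ip Kf l lam X Y y z U (h *: Kf (X i) + cb b)).
    by apply: funext => h; rewrite /Rhat combD combZ comb_delta.
  exact: (line1 Kf X hip lam hl hY hy hz).
rewrite G dirder.
have -> : (fun h => dR ip Kf X l lam Y y z U (cb (h *: delta_mx j 0 + a0)) (Kf (X i))) =
          (fun h => dR ip Kf X l lam Y y z U (h *: Kf (X j) + cb a0) (Kf (X i))).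
  by apply: funext => h; rewrite combD combZ comb_delta.
exact: (line2 Kf X hip lam hl hY hy hz).
Qed.

Variable g0 : V.
Local Notation T := (d2Rbold ip Kf l lam X Y y z U g0).
Local Notation D2 := (d2R ip Kf X l lam Y y z U g0).
Local Notation Hm := (\matrix_(i, j) D2 (Kf (X i)) (Kf (X j))).

Lemma TipE f1 f2 : ip (T f2) f1 = D2 f1 f2.
Proof. exact: Tip. Qed.

Lemma symE f1 f2 : D2 f1 f2 = D2 f2 f1.
Proof. exact: D2_sym. Qed.

Lemma Hx x j : (Hm *m x) j 0 = ip (T (cb x)) (Kf (X j)).
Proof.
rewrite TipE symE -TipE.
rewrite (ipC hip).
rewrite (ip_comb Kf X hip).
rewrite mxE.
apply: eq_bigr => k _.
by rewrite mxE (ipC hip (Kf _)) TipE symE mulrC.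
Qed.

Lemma ip_zero f : ip f f <= 0 -> f = 0.
Proof.
move=> h; apply: (ip_def hip); apply/eqP; rewrite eq_le h.
exact: (ip_ge0 hip).
Qed.

Lemma D2_nonpos f : D2 f f <= 0 -> f = 0.
Proof.
move=> h; apply: ip_zero.
have := le_trans (D2_pos ip Kf X lam hl hY hy hz g0 f) h.
rewrite pmulr_rle0 // => h2.
have := ip_ge0 hip f; lra.
Qed.

Lemma kerHK (x : 'cV[R]_n.+1) : Hm *m x = 0 -> K *m x = 0.
Proof.
move=> Hx0.
have s : \sum_j x j 0 * ip (T (cb x)) (Kf (X j)) = 0.
  by rewrite big1 // => j _; rewrite -Hx Hx0 mxE mulr0.
have e : \sum_j x j 0 * ip (T (cb x)) (Kf (X j)) = D2 (cb x) (cb x).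
  rewrite -TipE (ipC hip) (ip_comb Kf X hip); apply: eq_bigr => j _.
  by rewrite (ipC hip (Kf _)).
have c0 : cb x = 0 by apply: D2_nonpos; rewrite -e s.
apply/matrixP => j k; rewrite (ord1 k) -(comb_ev Kf X hip) c0 (ip0l hip) mxE.
by [].
Qed.

Lemma Hm_sym : Hm^T = Hm.
Proof. by apply/matrixP => i j; rewrite !mxE symE. Qed.

Lemma HBK : Hm *m mpinv Hm *m K = K.
Proof.
have [p1 p2 p3 p4] := mpinv_penrose Hm.
set B := mpinv Hm in p1 p2 p3 p4 *.
have HZ : Hm *m (1%:M - B *m Hm) = 0 by rewrite mulmxBr mulmx1 mulmxA p1 subrr.
have KZ : K *m (1%:M - B *m Hm) = 0.
  apply/matrixP => a c.
  have := @kerHK ((1%:M - B *m Hm) *m delta_mx c 0).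
  rewrite mulmxA HZ mul0mx => /(_ erefl); rewrite mulmxA => /matrixP/(_ a 0).
  by rewrite -colE !mxE.
have EK : K = Hm *m B^T *m K.
  move: KZ; rewrite mulmxBr mulmx1 => /eqP; rewrite subr_eq0 => /eqP E.
  have := congr1 trmx E; rewrite !trmx_mul Gram_sym // Hm_sym.
  by [].
by rewrite [in LHS]EK !mulmxA p1 -EK.
Qed.

Lemma restr_eq : restr_inv T (spanA Kf X) (Kf (X ord_max))
   = cb (mpinv Hm *m col ord_max K).
Proof.
set b := mpinv Hm *m col ord_max K.
have Hb : Hm *m b = col ord_max K by rewrite /b colE !mulmxA HBK.
have uniq g1 g2 : T g1 = Kf (X ord_max) -> T g2 = Kf (X ord_max) -> g1 = g2.
  move=> e1 e2; apply/eqP; rewrite -subr_eq0; apply/eqP; apply: D2_nonpos.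
  by rewrite (D2_B Kf X hip) -!TipE e1 e2 subrr.
have Tg : T (cb b) = Kf (X ord_max).
  set u := T (cb b) - Kf (X ord_max).
  have evu j : evalH ip Kf u (X j) = 0.
    rewrite /evalH /u (ipBl hip) -Hx Hb !mxE /kappa (ipC hip (Kf (X ord_max))).
    by rewrite subrr.
  have evu' j : ip u (Kf (X j)) = 0 by exact: evu.
  have ipug : ip u (cb b) = 0.
    rewrite (ipC hip) (ip_comb Kf X hip) big1 // => k _.
    by rewrite (ipC hip) evu' mulr0.
  have : ip u u = 0.
    rewrite {2}/u (ipBr hip) (ipC hip u) TipE (D2_zero l lam Y y z g0 evu ipug).
    by rewrite evu' subrr.
  by move/(ip_def hip)/eqP; rewrite subr_eq0 => /eqP.
have P : exists g, (spanA Kf X) g /\ T g = Kf (X ord_max).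
  by exists (cb b); split => //; exists b.
have [_ Hx'] := xgetPex 0 P.
exact: uniq Hx' Tg.
Qed.

End M2.

Unset Implicit Arguments.

Theorem lemma17 (R : realType) (d n : nat)
  (Xsp : set 'rV[R]_d) (Ysp : set R)
  (V : lmodType R) (ip : V -> V -> R) (Kf : 'rV[R]_d -> V)
  (hH : is_RKHS ip Kf)
  (l : R -> R -> R) (beta : R) (hl : loss_assumptions Ysp l beta)
  (lam : R) (hlam : 0 < lam)
  (X : 'I_n.+1 -> 'rV[R]_d) (hX : forall i, Xsp (X i))
  (Y : 'I_n -> R) (hY : forall i, Ysp (Y i))
  (y z : R) (hy : Ysp y) (hz : Ysp z)
  (fhat : V)
  (hfhat : forall g : V, Rbold ip Kf l lam X Y y z (@uvec R n) fhat
                         <= Rbold ip Kf l lam X Y y z (@uvec R n) g)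
  (ahat : 'cV[R]_n.+1)
  (hahat_range : in_rangeK ip Kf X ahat)
  (hahat_min : forall a : 'cV[R]_n.+1, in_rangeK ip Kf X a ->
      Rhat ip Kf l lam X Y y z (@uvec R n) ahat <= Rhat ip Kf l lam X Y y z (@uvec R n) a)
  (z' : R) (hz' : Ysp z') :
  Ibold ip Kf l lam X Y y z fhat z'
  = \sum_(i < n.+1) (Ivec ip Kf l lam X Y y z ahat z') i 0 *: Kf (X i).
Proof.
case: hH => hip _ _.
have ef : fhat = comb Kf X ahat := fhat_comb hip hl hY hz hlam hfhat hahat_min.
rewrite /Ibold /Ivec (hess_eq Kf X hip lam hl hY hy hz ahat) ef.
rewrite (restr_eq Kf X hip hl hY hy hz hlam (comb Kf X ahat)).
have -> : forall c : 'cV[R]_n.+1, \sum_(i < n.+1) c i 0 *: Kf (X i) = comb Kf X c by [].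
rewrite combZ; congr (_ *: _); congr (_ * _); congr (d2l l z' _).
rewrite /evalH (comb_ev Kf X hip) !mxE; apply: eq_bigr => i _.
by rewrite !mxE mulrC /kappa (ipC hip).
Qed.
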